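(* For integers $1\le r\le t$, $$3rt + 2r + 2t +1 - \left\lfloor \frac{r}{2} \right\rfloor \le dim_s(C_{2r+1}\boxtimes C_{2t+1})\le 3rt + 2r + 2t +1.$$
   Context: $C_{m}$ is the cycle on $m$ vertices. For a connected graph $G$ with shortest-path distance $d_G$, a vertex $w$ strongly resolves $u,v$ if $d_G(w,u)=d_G(w,v)+d_G(v,u)$ or $d_G(w,v)=d_G(w,u)+d_G(u,v)$; $dim_s(G)$ is the minimum cardinality of a set $S\subseteq V(G)$ such that every pair of vertices is strongly resolved by some vertex of $S$. The strong product $G\boxtimes H$ has vertex set $V(G)\times V(H)$, with $(a,b)\sim(c,d)$ iff ($a=c$ and $bd\in E(H)$) or ($ac\in E(G)$ and $b=d$) or ($ac\in E(G)$ and $bd\in E(H)$). *)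

(* Defs.v *)
From mathcomp Require Import all_boot.
Set Implicit Arguments. Unset Strict Implicit. Unset Printing Implicit Defensive.

(* A (simple) graph: a finite vertex type T with an adjacency relation e
   (symmetric, irreflexive for the graphs used below). *)

Definition walk (T : finType) (e : rel T) (n : nat) (x y : T) : bool :=
  [exists p : n.-tuple T, path e x p && (last x p == y)].

(* shortest-path distance: least n < #|T| with a walk of length n from x to y
   (in a connected graph such an n always exists; otherwise returns #|T|) *)
Definition dist (T : finType) (e : rel T) (x y : T) : nat :=
  find (fun n => walk e n x y) (iota 0 #|T|).

Definition sresolves (T : finType) (e : rel T) (w u v : T) : bool :=
  (dist e w u == dist e w v + dist e v u) || (dist e w v == dist e w u + dist e u v).

Definition strong_resolving (T : finType) (e : rel T) (S : {set T}) : bool :=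
  [forall u, forall v, [exists w in S, sresolves e w u v]].

Definition sdim (T : finType) (e : rel T) : nat :=
  \big[minn/#|T|]_(S : {set T} | strong_resolving e S) #|S|.

Definition cycle_rel (m : nat) : rel 'I_m :=
  fun i j => (j == (i.+1 %% m) :> nat) || (i == (j.+1 %% m) :> nat).

Definition strong_prod (A B : finType) (eA : rel A) (eB : rel B) : rel (A * B) :=
  fun x y => [|| (x.1 == y.1) && eB x.2 y.2,
                 eA x.1 y.1 && (x.2 == y.2) |
                 eA x.1 y.1 && eB x.2 y.2].
Arguments cycle_rel m : clear implicits.

(* Main.v *)
Require Import Defs.
From mathcomp Require Import all_boot.
From mathcomp Require Import zify.
Set Implicit Arguments. Unset Strict Implicit. Unset Printing Implicit Defensive.

Lemma modS m i : i < m -> i.+1 %% m = if i.+1 == m then 0 else i.+1.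
Proof.
move=> h; case: eqP => [->|ne]; first by rewrite modnn.
by rewrite modn_small //; lia.
Qed.

Definition adjN m a a' := (a' = a.+1 /\ a.+1 < m) \/ (a.+1 = m /\ a' = 0) \/ (a = a'.+1) \/ (a'.+1 = m /\ a = 0).

Lemma cycle_adjN m (i j : 'I_m) : cycle_rel m i j -> adjN m i j.
Proof.
have hi := ltn_ord i; have hj := ltn_ord j.
rewrite /cycle_rel !modS //; case: (i.+1 =P m) => e1; case: (j.+1 =P m) => e2; rewrite /adjN; lia.
Qed.

Lemma adjN_cycle m (i j : 'I_m) : adjN m i j -> cycle_rel m i j.
Proof.
have hi := ltn_ord i; have hj := ltn_ord j.
rewrite /cycle_rel !modS //; case: (i.+1 =P m) => e1; case: (j.+1 =P m) => e2; rewrite /adjN; lia.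
Qed.

Lemma cycle_sym m (i j : 'I_m) : cycle_rel m i j = cycle_rel m j i.
Proof. by rewrite /cycle_rel orbC. Qed.

Lemma walk_dist (T : finType) (e : rel T) (D : T -> T -> nat) x y :
 (forall x, D x x = 0) ->
 (forall x x' y, e x x' -> D x y <= (D x' y).+1) ->
 (forall x y, 0 < D x y -> exists x', e x x' /\ D x' y = (D x y).-1) ->
 (forall x y, D x y = 0 -> x = y) ->
 (forall x y, D x y < #|T|) -> dist e x y = D x y.
Proof.
move=> H0 H1 H2 H3 H4.
have wle : forall (p : seq T) x, path e x p -> D x (last x p) <= size p.
  elim=> [|z p IH] x0 /=; first by rewrite H0.
  move=> /andP[ez hp]; apply: leq_trans (H1 _ _ _ ez) _; by rewrite ltnS IH.
have wex : forall n x, D x y = n -> walk e n x y.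
  elim=> [|n IH] x0 hD.
    rewrite (H3 _ _ hD); apply/existsP; exists [tuple]; by rewrite /= eqxx.
  have [x' [ex hx']] : exists x', e x0 x' /\ D x' y = (D x0 y).-1 by apply: H2; rewrite hD.
  have /existsP[p /andP[hp hl]] := IH x' (etrans hx' (congr1 _ hD)).
  apply/existsP; exists [tuple of x' :: p]; by rewrite /= ex hp.
have hmin : forall n, walk e n x y -> D x y <= n.
  move=> n /existsP[p /andP[hp /eqP hl]]; rewrite -hl; have := wle p x hp; by rewrite size_tuple.
rewrite /dist; set P := fun n => walk e n x y.
have hP : P (D x y) by apply: wex.
have hs : has P (iota 0 #|T|) by apply/hasP; exists (D x y) => //; rewrite mem_iota add0n H4.
have := has_find P (iota 0 #|T|); rewrite hs size_iota => /esym hf.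
have := nth_find 0 hs; rewrite nth_iota // add0n => /hmin h1.
apply/eqP; rewrite eqn_leq h1 andbT leqNgt; apply/negP => hlt.
have := before_find 0 hlt; rewrite nth_iota ?add0n ?hP //; exact: ltn_trans hlt hf.
Qed.
Definition cd (m a b : nat) : nat := minn ((a - b) + (b - a)) (m - ((a - b) + (b - a))).
Lemma cd_sym m a b : cd m a b = cd m b a.
Proof. rewrite /cd; lia. Qed.
Lemma cd_tri m a b x : a < m -> b < m -> x < m -> cd m a b <= cd m a x + cd m x b.
Proof. rewrite /cd; lia. Qed.
Lemma cd_le m k a b : m = 2 * k + 1 -> a < m -> b < m -> cd m a b <= k.
Proof. rewrite /cd; lia. Qed.
Lemma cd0 m a b : a < m -> b < m -> cd m a b = 0 -> a = b.
Proof. rewrite /cd; lia. Qed.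
Lemma cdxx m a : cd m a a = 0.
Proof. rewrite /cd; lia. Qed.
Lemma cd_adj m a a' b : a < m -> a' < m -> b < m -> adjN m a a' -> cd m a b <= (cd m a' b).+1.
Proof. rewrite /cd /adjN => ? ? ? [[? ?]|[[? ?]|[?|[? ?]]]]; lia. Qed.
Lemma toward m a b : a < m -> b < m -> 0 < cd m a b ->
  exists a', [/\ a' < m, adjN m a a' & cd m a' b = (cd m a b).-1].
Proof.
move=> ha hb; rewrite /adjN /cd => hc.
case: (leqP a b) => h.
  case: (leqP (b-a) (m-(b-a))) => h2.
    by exists a.+1; split; lia.
  case: (posnP a) => h3.
    by exists m.-1; split; lia.
  by exists a.-1; split; lia.
case: (leqP (a-b) (m-(a-b))) => h2.
  by exists a.-1; split; lia.
case: (ltnP a.+1 m) => h3.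
  by exists a.+1; split; lia.
by exists 0; split; lia.
Qed.
Lemma away m k a b : m = 2 * k + 1 -> a < m -> b < m -> cd m a b < k ->
  exists a', [/\ a' < m, adjN m a a' & cd m a' b = (cd m a b).+1].
Proof.
move=> hm ha hb; rewrite /adjN /cd => hc.
case: (leqP b a) => h.
  case: (leqP (a-b) (m-(a-b))) => h2.
    case: (ltnP a.+1 m) => h3.
      by exists a.+1; split; lia.
    by exists 0; split; lia.
  by exists a.-1; split; lia.
case: (leqP (b-a) (m-(b-a))) => h2.
  case: (posnP a) => h3.
    by exists m.-1; split; lia.
  by exists a.-1; split; lia.
case: (ltnP a.+1 m) => h3.
  by exists a.+1; split; lia.
by exists 0; split; lia.
Qed.

Lemma coord_le m (a a' b : 'I_m) : (a == a') || cycle_rel m a a' -> cd m a b <= (cd m a' b).+1.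
Proof.
case/orP => [/eqP->|/cycle_adjN h]; first by lia.
exact: cd_adj (ltn_ord _) (ltn_ord _) (ltn_ord _) h.
Qed.

Lemma coord_step m (a b : 'I_m) : exists a' : 'I_m,
  (a' = a /\ cd m a b = 0) \/ (cycle_rel m a a' /\ cd m a' b = (cd m a b).-1 /\ 0 < cd m a b).
Proof.
case: (posnP (cd m a b)) => h; first by exists a; left.
have [a' [ha' hadj hc]] := toward (ltn_ord a) (ltn_ord b) h.
exists (Ordinal ha'); right; split => //; exact: (@adjN_cycle m a (Ordinal ha')).
Qed.

Definition DD m1 m2 (x y : 'I_m1 * 'I_m2) := maxn (cd m1 x.1 y.1) (cd m2 x.2 y.2).

Lemma DD_sym m1 m2 (x y : 'I_m1 * 'I_m2) : DD x y = DD y x.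
Proof. by rewrite /DD cd_sym [cd m2 _ _]cd_sym. Qed.

Lemma DD_tri m1 m2 (x y z : 'I_m1 * 'I_m2) : DD x z <= DD x y + DD y z.
Proof.
rewrite /DD; have := @cd_tri m1 x.1 z.1 y.1 (ltn_ord _) (ltn_ord _) (ltn_ord _).
have := @cd_tri m2 x.2 z.2 y.2 (ltn_ord _) (ltn_ord _) (ltn_ord _); lia.
Qed.

Lemma DD0 m1 m2 (x y : 'I_m1 * 'I_m2) : DD x y = 0 -> x = y.
Proof.
case: x y => [x1 x2] [y1 y2]; rewrite /DD /= => h.
have h1 : cd m1 x1 y1 = 0 by lia.
have h2 : cd m2 x2 y2 = 0 by lia.
by rewrite (val_inj (cd0 (ltn_ord _) (ltn_ord _) h1)) (val_inj (cd0 (ltn_ord _) (ltn_ord _) h2)).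
Qed.

Lemma DD_adj m1 m2 (x x' y : 'I_m1 * 'I_m2) :
  strong_prod (cycle_rel m1) (cycle_rel m2) x x' -> DD x y <= (DD x' y).+1.
Proof.
move=> he.
have [h1 h2] : ((x.1 == x'.1) || cycle_rel m1 x.1 x'.1) /\ ((x.2 == x'.2) || cycle_rel m2 x.2 x'.2).
  by move: he; rewrite /strong_prod; case/or3P => /andP[-> ->]; rewrite ?orbT.
have := coord_le y.1 h1; have := coord_le y.2 h2; rewrite /DD; lia.
Qed.

Lemma DD_step m1 m2 (x y : 'I_m1 * 'I_m2) : 0 < DD x y ->
  exists x', strong_prod (cycle_rel m1) (cycle_rel m2) x x' /\ DD x' y = (DD x y).-1.
Proof.
case: x => [x1 x2]; rewrite /DD /= => hp.
have [a1 h1] := coord_step x1 y.1; have [a2 h2] := coord_step x2 y.2.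
exists (a1, a2); rewrite /strong_prod /=.
case: h1 => [[-> c1]|[c1 [d1 p1]]]; case: h2 => [[-> c2]|[c2 [d2 p2]]].
- lia.
- by rewrite eqxx c2 /=; split=> //; lia.
- by rewrite eqxx c1 /= orbT; split=> //; lia.
- by rewrite c1 c2 /= !orbT; split=> //; lia.
Qed.

Lemma DD_lt m1 m2 k1 k2 (x y : 'I_m1 * 'I_m2) : m1 = 2 * k1 + 1 -> m2 = 2 * k2 + 1 ->
  DD x y < #|{: 'I_m1 * 'I_m2}|.
Proof.
move=> e1 e2; rewrite card_prod !card_ord /DD.
have := cd_le e1 (ltn_ord x.1) (ltn_ord y.1).
have := cd_le e2 (ltn_ord x.2) (ltn_ord y.2).
have : m1 <= m1 * m2 by rewrite leq_pmulr // e2 addn1.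
have : m2 <= m1 * m2 by rewrite leq_pmull // e1 addn1.
lia.
Qed.

Lemma dist_DD m1 m2 k1 k2 (x y : 'I_m1 * 'I_m2) : m1 = 2 * k1 + 1 -> m2 = 2 * k2 + 1 ->
  dist (strong_prod (cycle_rel m1) (cycle_rel m2)) x y = DD x y.
Proof.
move=> e1 e2; apply: walk_dist.
- by move=> z; rewrite /DD !cdxx.
- exact: DD_adj.
- exact: DD_step.
- exact: DD0.
- by move=> *; apply: DD_lt e1 e2.
Qed.

Lemma modk m k a : a < m -> k < m -> (a + k) %% m = if a + k < m then a + k else a + k - m.
Proof.
move=> ha hk; case: ltnP => h; first by rewrite modn_small.
by rewrite -{1}(subnK h) modnDr modn_small; lia.
Qed.

Lemma card_noanti m k (A : {set 'I_m}) : m = 2 * k + 1 ->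
  (forall a b, a \in A -> b \in A -> cd m a b != k) -> #|A| <= k.
Proof.
move=> hm hA.
have mpos : 0 < m by lia.
have hk : k < m by lia.
pose f (a : 'I_m) : 'I_m := Ordinal (ltn_pmod (a + k) mpos).
have finj : injective f.
  move=> a b /(congr1 val) /=; rewrite !modk //; have := ltn_ord a; have := ltn_ord b.
  move=> ha hb; case: ifP; case: ifP => h1 h2 e; apply: val_inj => /=; lia.
have fcd : forall a : 'I_m, cd m a (f a) = k.
  move=> a /=; rewrite modk //; have := ltn_ord a; case: ifP; rewrite /cd; lia.
have hI : A :&: f @: A = set0.
  apply/setP => x; rewrite !inE; apply/negP => /andP[xa /imsetP[a ha ex]].
  by move: (hA a x ha xa); rewrite ex fcd eqxx.
have := cardsU A (f @: A); rewrite hI cards0 subn0 card_imset //.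
have := max_card (A :|: f @: A); rewrite card_ord => X Y; rewrite Y in X; move: X; move: #|A| => z; lia.
Qed.

Lemma card_cols r t (I : {set 'I_(2 * r + 1) * 'I_(2 * t + 1)}) :
  (forall u v, u \in I -> v \in I -> cd (2 * t + 1) u.2 v.2 != t) ->
  (forall u v, u \in I -> v \in I -> u.2 = v.2 -> cd (2 * r + 1) u.1 v.1 != r) ->
  #|I| <= r * t.
Proof.
move=> h2 h1.
pose J := [set j | [exists i, (i, j) \in I]].
have hJ : #|J| <= t.
  apply: (card_noanti (erefl _)) => a b; rewrite !inE => /existsP[i ha] /existsP[i' hb].
  exact: (h2 _ _ ha hb).
have inner : forall j, \sum_(x | (x \in I) && (x.2 == j)) 1 <= (if j \in J then r else 0).
  move=> j; case: ifP => hj; last first.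
    rewrite big_pred0 // => x; apply/negbTE/negP => /andP[xi /eqP xj].
    by move: hj; rewrite inE; move/negbT/negP; apply; apply/existsP; exists x.1; rewrite -xj -surjective_pairing.
  pose Aj := [set i | (i, j) \in I].
  have hAj : #|Aj| <= r.
    apply: (card_noanti (erefl _)) => a b; rewrite /Aj !inE => ha hb.
    exact: (h1 _ _ ha hb).
  rewrite sum1_card; apply: leq_trans hAj.
  have -> : #|Aj| = #|(fun i => (i, j)) @: Aj| by rewrite card_imset // => a b [].
  apply: subset_leq_card; apply/subsetP => x; rewrite unfold_in => /andP[xi /eqP xj].
  apply/imsetP; exists x.1; first by rewrite inE -xj -surjective_pairing.
  by rewrite -xj -surjective_pairing.
rewrite -sum1_card (partition_big snd predT) //=.
apply: leq_trans; first by apply: leq_sum => j _; exact: inner j.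
rewrite -big_mkcond /= sum_nat_const mulnC.
by apply: leq_mul.
Qed.

Lemma box_res r t (u v : 'I_(2*r+1) * 'I_(2*t+1)) : 1 <= r -> r <= t ->
  u.1 < r -> u.2 < t -> v.1 < r -> v.2 < t ->
  (u.2 <= v.2 /\ (u.1 - v.1) + (v.1 - u.1) <= v.2 - u.2) \/
  (u.1 < v.1 /\ (u.2 - v.2) + (v.2 - u.2) < v.1 - u.1) ->
  exists w : 'I_(2*r+1) * 'I_(2*t+1), ~~ ((w.1 < r) && (w.2 < t)) /\ DD w u = DD w v + DD v u.
Proof.
case: u v => [a b] [a' b'] /= r1 rt ha hb ha' hb' [[h1 h2]|[h1 h2]].
  have h : b + t < 2 * t + 1 by lia.
  exists (a', Ordinal h); split; first by rewrite /=; lia.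
  rewrite /DD /= !cdxx.
  have e1 : cd (2*r+1) a' a = (a'-a)+(a-a') by rewrite /cd; lia.
  have e2 : cd (2*t+1) (b + t) b = t by rewrite /cd; lia.
  have e3 : cd (2*t+1) (b + t) b' = b + t - b' by rewrite /cd; lia.
  have e4 : cd (2*t+1) b' b = b' - b by rewrite /cd; lia.
  rewrite e1 e2 e3 e4; lia.
have h : a + r < 2 * r + 1 by lia.
exists (Ordinal h, b'); split; first by rewrite /=; lia.
rewrite /DD /= !cdxx.
have e1 : cd (2*t+1) b' b = (b'-b)+(b-b') by rewrite /cd; lia.
have e2 : cd (2*r+1) (a + r) a = r by rewrite /cd; lia.
have e3 : cd (2*r+1) (a + r) a' = a + r - a' by rewrite /cd; lia.
have e4 : cd (2*r+1) a' a = a' - a by rewrite /cd; lia.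
rewrite e1 e2 e3 e4; lia.
Qed.

Definition EE r t (u v : 'I_(2*r+1) * 'I_(2*t+1)) :=
  (cd (2*t+1) u.2 v.2 == t) || ((cd (2*r+1) u.1 v.1 == r) && (cd (2*t+1) u.2 v.2 < r)).

Lemma EE_sym r t (u v : 'I_(2*r+1) * 'I_(2*t+1)) : EE u v = EE v u.
Proof. by rewrite /EE (cd_sym _ u.1) (cd_sym _ u.2). Qed.

Lemma EE_max r t (u v v' : 'I_(2*r+1) * 'I_(2*t+1)) : r <= t -> EE u v ->
  strong_prod (cycle_rel (2*r+1)) (cycle_rel (2*t+1)) v v' -> DD u v' <= DD u v.
Proof.
move=> rt hE he.
have [h1 h2] : ((v.1 == v'.1) || cycle_rel _ v.1 v'.1) /\ ((v.2 == v'.2) || cycle_rel _ v.2 v'.2).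
  by move: he; rewrite /strong_prod; case/or3P => /andP[-> ->]; rewrite ?orbT.
rewrite eq_sym cycle_sym in h1; rewrite eq_sym cycle_sym in h2.
have c1 := coord_le u.1 h1; have c2 := coord_le u.2 h2.
have b1 := cd_le (erefl (2*r+1)) (ltn_ord v'.1) (ltn_ord u.1).
have b2 := cd_le (erefl (2*t+1)) (ltn_ord v'.2) (ltn_ord u.2).
have b3 := cd_le (erefl (2*r+1)) (ltn_ord v.1) (ltn_ord u.1).
move: hE; rewrite /EE /DD (cd_sym _ u.1 v.1) (cd_sym _ u.2 v.2) (cd_sym _ u.1 v'.1) (cd_sym _ u.2 v'.2).
lia.
Qed.

Lemma EE_res r t (u v w : 'I_(2*r+1) * 'I_(2*t+1)) : r <= t -> EE u v ->
  DD w u = DD w v + DD v u -> w = v.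
Proof.
move=> rt hE hD; case: (w =P v) => // ne.
have hp : 0 < DD v w by rewrite lt0n; apply/eqP => /DD0 /esym.
have [v' [he hv']] := DD_step hp.
have := DD_tri w v' u; have := EE_max rt hE he.
rewrite (DD_sym w v') (DD_sym u v') (DD_sym u v) (DD_sym w v) in hD *.
lia.
Qed.

Lemma bigmin_le (T : finType) (P : pred T) (F : T -> nat) x0 a : P a ->
  \big[minn/x0]_(x | P x) F x <= F a.
Proof.
move=> Pa; have : a \in index_enum T by rewrite mem_index_enum.
elim: (index_enum T) => // y s IH; rewrite inE big_cons; case/orP => [/eqP<-|h].
  by rewrite Pa geq_minl.
by case: ifP => _; [rewrite geq_min IH // orbT | exact: IH].
Qed.

Lemma card_lt m r : r <= m -> #|[set i : 'I_m | i < r]| = r.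
Proof.
move=> h.
have -> : [set i : 'I_m | i < r] = (widen_ord h) @: [set: 'I_r].
  apply/setP => i; rewrite !inE; apply/idP/imsetP.
    by move=> hi; exists (Ordinal hi) => //; apply: val_inj.
  by case=> j _ ->; rewrite /= ltn_ord.
rewrite card_imset ?cardsT ?card_ord //.
by move=> a b /(congr1 val) /= /val_inj.
Qed.

Theorem theorem20 (r t : nat) :
  1 <= r -> r <= t ->
  3 * r * t + 2 * r + 2 * t + 1
    <= sdim (strong_prod (cycle_rel (2 * r + 1)) (cycle_rel (2 * t + 1))) + r./2
  /\ sdim (strong_prod (cycle_rel (2 * r + 1)) (cycle_rel (2 * t + 1)))
    <= 3 * r * t + 2 * r + 2 * t + 1.
Proof.
move=> r1 rt.
set e := strong_prod _ _.
have dE : forall x y, dist e x y = DD x y by move=> x y; apply: (dist_DD _ _ (erefl _) (erefl _)).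
have cT : #|{: 'I_(2*r+1) * 'I_(2*t+1)}| = (2*r+1)*(2*t+1) by rewrite card_prod !card_ord.
split.
  rewrite /sdim; apply: (big_ind (fun n => 3 * r * t + 2 * r + 2 * t + 1 <= n + r./2)).
  - rewrite cT; lia.
  - move=> x y hx hy; lia.
  - move=> S /forallP hS.
    have noE : forall u v, u \in ~: S -> v \in ~: S -> ~~ EE u v.
      move=> u v; rewrite !inE => hu hv; apply/negP => hE.
      have /existsP[w /andP[wS]] := forallP (hS u) v.
      rewrite /sresolves !dE => /orP[/eqP h|/eqP h].
        by move: hv; rewrite -(EE_res rt hE h) wS.
      by move: hu; rewrite EE_sym in hE; rewrite -(EE_res rt hE h) wS.
    have hc : #|~: S| <= r * t.
      apply: card_cols => u v hu hv.
        by have := noE u v hu hv; rewrite /EE; apply: contra => ->.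
      move=> he; have := noE u v hu hv; rewrite /EE he cdxx; apply: contra => ->; by rewrite r1 orbT.
    have := cardsC S; rewrite cT => hS2.
    move: hc hS2; move: #|S| #|~: S| => a b; lia.
pose S0 := [set x : 'I_(2*r+1) * 'I_(2*t+1) | ~~ ((x.1 < r) && (x.2 < t))].
have hres : strong_resolving e S0.
  apply/forallP => u; apply/forallP => v; apply/existsP.
  case: (boolP (u \in S0)) => hu.
    by exists u; rewrite hu /sresolves !dE /DD !cdxx /=; apply/orP; right; apply/eqP; lia.
  case: (boolP (v \in S0)) => hv.
    by exists v; rewrite hv /sresolves !dE /DD !cdxx /=; apply/orP; left; apply/eqP; lia.
  move: hu hv; rewrite !inE !negbK => /andP[hu1 hu2] /andP[hv1 hv2].
  have [c|c] : ((u.2 <= v.2 /\ (u.1 - v.1) + (v.1 - u.1) <= v.2 - u.2) \/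
      (u.1 < v.1 /\ (u.2 - v.2) + (v.2 - u.2) < v.1 - u.1)) \/
     ((v.2 <= u.2 /\ (v.1 - u.1) + (u.1 - v.1) <= u.2 - v.2) \/
      (v.1 < u.1 /\ (v.2 - u.2) + (u.2 - v.2) < u.1 - v.1)) by lia.
    have [w [hw hD]] := box_res r1 rt hu1 hu2 hv1 hv2 c.
    by exists w; rewrite inE hw /sresolves !dE hD eqxx.
  have [w [hw hD]] := box_res r1 rt hv1 hv2 hu1 hu2 c.
  by exists w; rewrite inE hw /sresolves !dE hD eqxx orbT.
apply: leq_trans (bigmin_le _ _ hres) _.
have hC : ~: S0 = setX [set i : 'I_(2*r+1) | i < r] [set j : 'I_(2*t+1) | j < t].
  by apply/setP => x; rewrite !inE negbK.
have := cardsC S0; rewrite hC cardsX !card_lt ?cT; try lia.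
Qed.
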